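(* Consider the setting of Proposition 4 and let $\mu(m)$ be the unique solution in $I$ of $G(\mu)=x$ with $x=\nu m/K$, for $m>0$ such that $x$ lies in the interior of $X$; let $p(m)=m/\mu(m)$ and $q(m)=\frac{1-\beta-\mu(m)}{\alpha(1-\sigma(1-\mu(m)))}$. If $\alpha(1-\beta\sigma)>0$, the markup $1/\mu(m)$ is strictly decreasing in $m$; if $\alpha(1-\beta\sigma)<0$, it is strictly increasing in $m$. In all cases $p(m)$ is strictly increasing and $q(m)$ strictly decreasing in $m$. If $\alpha=0$ (with $\beta\in(0,1)$) or $\beta=\frac1\sigma$ (with $\sigma>1$), the markup is constant in $m$ ($p(m)=\frac m{1-\beta}$, resp. $p(m)=\frac{\sigma m}{\sigma-1}$), the price is strictly increasing and the quantity $q(m)$ solving $u'(q)=\nu p(m)$ is strictly decreasing in $m$.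
   Context: Monopolistic competition setting: a firm with marginal cost $m>0$ faces inverse demand $p=u'(q)/\nu$ ($\nu>0$ fixed) with LFRRA utility, $-qu''(q)/u'(q)=\frac{\alpha q+\beta}{\alpha\sigma q+1}$ and $u'(q)=K(1+\alpha\sigma q)^{\beta-\frac1\sigma}q^{-\beta}$, $K>0$; $\mu=m/p$ is the inverse markup. $G$, $I$, $X$ are as follows (with $\Delta=\sqrt{(1-\beta)(1-\beta\sigma)}$): $G(\mu)=\mu[\frac{1-\beta\sigma}{1-\sigma(1-\mu)}]^{\beta-\frac1\sigma}[\frac{1-\beta-\mu}{\alpha(1-\sigma(1-\mu))}]^{-\beta}$ for $\sigma\neq0$ and $G(\mu)=\mu e^{-(1-\beta-\mu)}(\frac{1-\beta-\mu}{\alpha})^{-\beta}$ for $\sigma=0$. Case 1a ($\alpha>0$, $1-\beta\sigma>0$): $\beta\in(0,1)$: $X=(0,\infty)$, $I=(0,1-\beta)$ ($\sigma\le1$) or $(\frac{\sigma-1}\sigma,1-\beta)$ ($\sigma>1$); $\beta=0$: $X=(0,1]$, $I=(0,1]$ ($\sigma\le1$) or $(\frac{\sigma-1}\sigma,1]$ ($\sigma>1$). Case 1b ($\alpha>0$, $1-\beta\sigma<0$): $\beta\in(0,1)$: $X=(0,\infty)$, $I=(1-\beta,\frac{\sigma-1}\sigma)$; $\beta=1$: $X=(0,\alpha(\sigma-1))$, $I=(0,\frac{\sigma-1}\sigma)$. Case 2a ($\alpha<0$, $1-\beta\sigma>0$, $\beta\in(0,1)$): $I=(1-\beta,\bar\mu)$,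 $\bar\mu=\frac{(1-\beta)\sigma+\Delta}{(1-\beta)\sigma+1}$, $X=(\lim_{\mu\to\bar\mu^-}G(\mu),\infty)$. Case 2b ($\alpha<0$, $1-\beta\sigma<0$, $\beta\in(0,1)$): $X=(0,\infty)$, $I=(0,1-\beta)$. In each case $G(\mu)=x$ has a unique solution in $I$ for $x\in X$. *)

(* Defs.v *)
From Stdlib Require Import Reals Lra.
From Coquelicot Require Import Coquelicot.
Open Scope R_scope.

(* LFRRA marginal utility u'(q) = K (1+a s q)^(b - 1/s) q^(-b)  (s <> 0);
   for s = 0 we use the limiting form K exp(-a q) q^(-b). *)
Definition uprime (a b s K q : R) : R :=
  if Req_EM_T s 0 then K * exp (- (a * q)) * Rpower q (- b)
  else K * Rpower (1 + a * s * q) (b - / s) * Rpower q (- b).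

(* relative risk aversion  -q u''(q)/u'(q) = (a q + b)/(a s q + 1) *)
Definition rra (a b s q : R) : R := (a * q + b) / (a * s * q + 1).

Definition G (a b s mu : R) : R :=
  if Req_EM_T s 0 then
    mu * exp (- (1 - b - mu)) * Rpower ((1 - b - mu) / a) (- b)
  else
    mu * Rpower ((1 - b * s) / (1 - s * (1 - mu))) (b - / s)
       * Rpower ((1 - b - mu) / (a * (1 - s * (1 - mu)))) (- b).

Definition qmu (a b s mu : R) : R := (1 - b - mu) / (a * (1 - s * (1 - mu))).

Definition case1a (a b s : R) : Prop := 0 < a /\ 0 < 1 - b * s /\ 0 <= b < 1.
Definition case1b (a b s : R) : Prop := 0 < a /\ 1 - b * s < 0 /\ 0 < b <= 1.
Definition case2a (a b s : R) : Prop := a < 0 /\ 0 < 1 - b * s /\ 0 < b < 1.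
Definition case2b (a b s : R) : Prop := a < 0 /\ 1 - b * s < 0 /\ 0 < b < 1.

Definition setting (a b s : R) : Prop :=
  case1a a b s \/ case1b a b s \/ case2a a b s \/ case2b a b s.

Definition mubar (b s : R) : R :=
  ((1 - b) * s + sqrt ((1 - b) * (1 - b * s))) / ((1 - b) * s + 1).

Definition inI (a b s mu : R) : Prop :=
  (case1a a b s /\
     ((s <= 1 /\ 0 < mu) \/ (1 < s /\ (s - 1) / s < mu)) /\
     ((0 < b /\ mu < 1 - b) \/ (b = 0 /\ mu <= 1)))
  \/ (case1b a b s /\
     ((b < 1 /\ 1 - b < mu /\ mu < (s - 1) / s) \/
      (b = 1 /\ 0 < mu /\ mu < (s - 1) / s)))
  \/ (case2a a b s /\ 1 - b < mu /\ mu < mubar b s)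
  \/ (case2b a b s /\ 0 < mu /\ mu < 1 - b).

Definition inX (a b s x : R) : Prop :=
  (case1a a b s /\ ((0 < b /\ 0 < x) \/ (b = 0 /\ 0 < x /\ x <= 1)))
  \/ (case1b a b s /\
     ((b < 1 /\ 0 < x) \/ (b = 1 /\ 0 < x /\ x < a * (s - 1))))
  \/ (case2a a b s /\
      exists L : R, filterlim (G a b s) (at_left (mubar b s)) (locally L) /\ L < x)
  \/ (case2b a b s /\ 0 < x).

Definition interiorR (S : R -> Prop) (x : R) : Prop :=
  exists e : R, 0 < e /\ forall y, Rabs (y - x) < e -> S y.

Definition admissible (a s q : R) : Prop := 0 < q /\ 0 < 1 + a * s * q.

(* Main.v *)
Require Import Defs.
From Stdlib Require Import Reals Lra.
From Coquelicot Require Import Coquelicot.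
Open Scope R_scope.

Lemma deriv_incr (f df : R -> R) l r :
  (forall t, l < t < r -> is_derive f t (df t)) -> (forall t, l < t < r -> 0 < df t) ->
  forall x y, l < x -> x < y -> y < r -> f x < f y.
Proof.
intros Hd Hp x y Hx Hxy Hy.
destruct (MVT_gen f x y df) as [c [Hc He]].
- intros z Hz. apply Hd. rewrite Rmin_left in Hz by lra. rewrite Rmax_right in Hz by lra. lra.
- intros z Hz. rewrite Rmin_left in Hz by lra. rewrite Rmax_right in Hz by lra.
  apply continuity_pt_filterlim. apply (ex_derive_continuous (V:=R_NormedModule)). eexists. apply Hd. lra.
- rewrite Rmin_left in Hc by lra. rewrite Rmax_right in Hc by lra.
  assert (0 < df c) by (apply Hp; lra).
  assert (0 < df c * (y - x)) by (apply Rmult_lt_0_compat; lra). lra.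
Qed.
Lemma deriv_decr (f df : R -> R) l r :
  (forall t, l < t < r -> is_derive f t (df t)) -> (forall t, l < t < r -> df t < 0) ->
  forall x y, l < x -> x < y -> y < r -> f y < f x.
Proof.
intros Hd Hp x y Hx Hxy Hy.
assert (- f x < - f y); [|lra].
apply (deriv_incr (fun t => - f t) (fun t => - df t) l r); auto.
- intros t Ht. apply (is_derive_opp f). auto.
- intros t Ht. specialize (Hp t Ht). lra.
Qed.

Lemma dE1 a b s t : s <> 0 -> a <> 0 -> 1 - b*s <> 0 -> (1 - s*(1-t)) <> 0 -> 1 - b - t <> 0 ->
  0 < (1 - b * s) / (1 - s * (1 - t)) -> 0 < (1 - b - t) / (a * (1 - s * (1 - t))) ->
  is_derive (fun t => Rpower ((1 - b * s) / (1 - s * (1 - t))) (b - / s) * Rpower ((1 - b - t) / (a * (1 - s * (1 - t)))) (- b)) t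
   ((Rpower ((1 - b * s) / (1 - s * (1 - t))) (b - / s) * Rpower ((1 - b - t) / (a * (1 - s * (1 - t)))) (- b)) * (/ (1 - s*(1-t)) + b / (1 - b - t))).
Proof.
intros. unfold Rpower, Rminus, Rdiv in *. auto_derive.
- repeat split; auto.
- set (X := exp _). set (Y := exp _). field. unfold Rminus in *. tauto.
Qed.
Lemma dE0 a b t : a <> 0 -> 1 - b - t <> 0 ->
  0 < (1 - b - t) / a ->
  is_derive (fun t => exp (- (1 - b - t)) * Rpower ((1 - b - t) / a) (- b)) t
   ((exp (- (1 - b - t)) * Rpower ((1 - b - t) / a) (- b)) * (/ (1 - 0*(1-t)) + b / (1 - b - t))).
Proof.
intros. unfold Rpower, Rminus, Rdiv in *. auto_derive.
- repeat split; auto.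
- set (X := exp _). set (Y := exp _). field. unfold Rminus in *. tauto.
Qed.

Definition Ef (a b s t : R) : R :=
  if Req_EM_T s 0 then exp (- (1 - b - t)) * Rpower ((1 - b - t) / a) (- b)
  else Rpower ((1 - b * s) / (1 - s * (1 - t))) (b - / s) * Rpower ((1 - b - t) / (a * (1 - s * (1 - t)))) (- b).

Lemma G_Ef a b s t : G a b s t = t * Ef a b s t.
Proof. unfold G, Ef. destruct (Req_EM_T s 0); ring. Qed.

Lemma Ef_pos a b s t : 0 < Ef a b s t.
Proof.
unfold Ef, Rpower. destruct (Req_EM_T s 0); apply Rmult_lt_0_compat; apply exp_pos.
Qed.

Definition phi' (b s t : R) := / (1 - s*(1-t)) + b / (1 - b - t).

Lemma Ef_deriv a b s t : a <> 0 -> 1 - b*s <> 0 -> (1 - s*(1-t)) <> 0 -> 1 - b - t <> 0 ->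
  (s <> 0 -> 0 < (1 - b * s) / (1 - s * (1 - t))) -> 0 < (1 - b - t) / (a * (1 - s * (1 - t))) ->
  is_derive (Ef a b s) t (Ef a b s t * phi' b s t).
Proof.
intros. unfold Ef, phi'. destruct (Req_EM_T s 0) as [e|n].
- subst s. apply dE0; auto. replace (a * (1 - 0 * (1 - t))) with a in * by ring. auto.
- apply dE1; auto.
Qed.

Lemma G_deriv a b s t : a <> 0 -> 1 - b*s <> 0 -> (1 - s*(1-t)) <> 0 -> 1 - b - t <> 0 ->
  (s <> 0 -> 0 < (1 - b * s) / (1 - s * (1 - t))) -> 0 < (1 - b - t) / (a * (1 - s * (1 - t))) ->
  is_derive (G a b s) t (Ef a b s t * (1 + t * phi' b s t)).
Proof.
intros. apply is_derive_ext with (f := fun t => t * Ef a b s t).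
{ intros; symmetry; apply G_Ef. }
replace (Ef a b s t * (1 + t * phi' b s t)) with (1 * Ef a b s t + t * (Ef a b s t * phi' b s t)) by ring.
apply (is_derive_mult (fun t => t) (Ef a b s)).
- auto_derive; auto; ring.
- apply Ef_deriv; auto.
- intros; apply Rmult_comm.
Qed.

Lemma q_deriv a b s t : a <> 0 -> (1 - s*(1-t)) <> 0 ->
  is_derive (qmu a b s) t (- (1 - b*s) / (a * (1 - s*(1-t))^2)).
Proof.
intros. unfold qmu. auto_derive.
- apply Rmult_integral_contrapositive_currified; auto. unfold Rminus in H0. auto.
- unfold Rminus in *. field. auto.
Qed.

Lemma pkg_inc a b s l r : a <> 0 -> 1 - b*s <> 0 ->
  (forall t, l < t < r -> (1 - s*(1-t)) <> 0 /\ 1 - b - t <> 0 /\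
    (s <> 0 -> 0 < (1 - b * s) / (1 - s * (1 - t))) /\ 0 < (1 - b - t) / (a * (1 - s * (1 - t))) /\
    0 < 1 + t * phi' b s t /\ 0 < phi' b s t /\ - (1 - b*s) / (a * (1 - s*(1-t))^2) < 0) ->
  forall x y, l < x -> x < y -> y < r ->
    G a b s x < G a b s y /\ Ef a b s x < Ef a b s y /\ qmu a b s y < qmu a b s x.
Proof.
intros Ha Hb H x y Hx Hxy Hy. split; [|split].
- apply (deriv_incr _ (fun t => Ef a b s t * (1 + t * phi' b s t)) l r); auto.
  + intros t Ht. destruct (H t Ht) as (?&?&?&?&?&?&?). apply G_deriv; auto.
  + intros t Ht. destruct (H t Ht) as (?&?&?&?&?&?&?). apply Rmult_lt_0_compat; auto. apply Ef_pos.
- apply (deriv_incr _ (fun t => Ef a b s t * phi' b s t) l r); auto.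
  + intros t Ht. destruct (H t Ht) as (?&?&?&?&?&?&?). apply Ef_deriv; auto.
  + intros t Ht. destruct (H t Ht) as (?&?&?&?&?&?&?). apply Rmult_lt_0_compat; auto. apply Ef_pos.
- apply (deriv_decr _ (fun t => - (1 - b*s) / (a * (1 - s*(1-t))^2)) l r); auto.
  + intros t Ht. destruct (H t Ht) as (?&?&?&?&?&?&?). apply q_deriv; auto.
  + intros t Ht. destruct (H t Ht) as (?&?&?&?&?&?&?). auto.
Qed.

Lemma pkg_dec a b s l r : a <> 0 -> 1 - b*s <> 0 ->
  (forall t, l < t < r -> (1 - s*(1-t)) <> 0 /\ 1 - b - t <> 0 /\
    (s <> 0 -> 0 < (1 - b * s) / (1 - s * (1 - t))) /\ 0 < (1 - b - t) / (a * (1 - s * (1 - t))) /\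
    1 + t * phi' b s t < 0 /\ phi' b s t < 0 /\ 0 < - (1 - b*s) / (a * (1 - s*(1-t))^2)) ->
  forall x y, l < x -> x < y -> y < r ->
    G a b s y < G a b s x /\ Ef a b s y < Ef a b s x /\ qmu a b s x < qmu a b s y.
Proof.
intros Ha Hb H x y Hx Hxy Hy. split; [|split].
- apply (deriv_decr _ (fun t => Ef a b s t * (1 + t * phi' b s t)) l r); auto.
  + intros t Ht. destruct (H t Ht) as (?&?&?&?&?&?&?). apply G_deriv; auto.
  + intros t Ht. destruct (H t Ht) as (?&?&?&?&?&?&?).
    pose proof (Ef_pos a b s t). nra.
- apply (deriv_decr _ (fun t => Ef a b s t * phi' b s t) l r); auto.
  + intros t Ht. destruct (H t Ht) as (?&?&?&?&?&?&?). apply Ef_deriv; auto.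
  + intros t Ht. destruct (H t Ht) as (?&?&?&?&?&?&?). pose proof (Ef_pos a b s t). nra.
- apply (deriv_incr _ (fun t => - (1 - b*s) / (a * (1 - s*(1-t))^2)) l r); auto.
  + intros t Ht. destruct (H t Ht) as (?&?&?&?&?&?&?). apply q_deriv; auto.
  + intros t Ht. destruct (H t Ht) as (?&?&?&?&?&?&?). auto.
Qed.


Lemma div_pos x y : 0 < x * y -> 0 < x / y.
Proof. intro H. assert (y <> 0) by (intro; subst; lra).
replace (x/y) with ((x*y) * (/y * /y)) by (field; auto).
apply Rmult_lt_0_compat; auto. assert (/y <> 0) by (apply Rinv_neq_0_compat; auto). nra. Qed.
Lemma div_neg x y : x * y < 0 -> x / y < 0.
Proof. intro H. assert (0 < -x / y); [apply div_pos; nra|].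
replace (-x/y) with (-(x/y)) in H0 by (field; intro; subst; lra). lra. Qed.

Lemma phi'_eq b s t : 1 - s*(1-t) <> 0 -> 1 - b - t <> 0 ->
  phi' b s t = ((1 - b*s) * (1 - t)) / ((1 - s*(1-t)) * (1 - b - t)).
Proof. intros. unfold phi'. field. auto. Qed.
Lemma one_phi'_eq b s t : 1 - s*(1-t) <> 0 -> 1 - b - t <> 0 ->
  1 + t * phi' b s t = ((1 - s*(1-t)) * (1 - b - t) + t * (1 - b - t) + b * t * (1 - s*(1-t)))
     / ((1 - s*(1-t)) * (1 - b - t)).
Proof. intros. unfold phi'. field. auto. Qed.

Lemma cond_inc a b s t : a <> 0 -> 0 < t -> t < 1 ->
  0 < (1-b*s) * (1 - s*(1-t)) -> 0 < (1 - b - t) * (a * (1 - s*(1-t))) ->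
  0 < (1-b*s) * (1 - s*(1-t)) * (1 - b - t) -> 0 < (1 - b*s) * a ->
  (1 - s*(1-t)) <> 0 /\ 1 - b - t <> 0 /\
    (s <> 0 -> 0 < (1 - b * s) / (1 - s * (1 - t))) /\ 0 < (1 - b - t) / (a * (1 - s * (1 - t))) /\
    0 < 1 + t * phi' b s t /\ 0 < phi' b s t /\ - (1 - b*s) / (a * (1 - s*(1-t))^2) < 0.
Proof.
intros Ha Ht Ht1 H1 H2 H3 H4.
assert (Hw : 1 - s*(1-t) <> 0) by (intro e; rewrite e in H1; lra).
assert (Hv : 1 - b - t <> 0) by (intro e; rewrite e in H2; lra).
assert (Hp : 0 < phi' b s t).
{ rewrite phi'_eq; auto. apply div_pos.
  replace ((1 - b * s) * (1 - t) * ((1 - s * (1 - t)) * (1 - b - t))) with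
   ((1 - t) * ((1-b*s) * (1 - s*(1-t)) * (1 - b - t))) by ring.
  apply Rmult_lt_0_compat; lra. }
repeat split; auto.
- intros _. apply div_pos. auto.
- apply div_pos. auto.
- nra.
- apply div_neg. assert (0 < (1 - s*(1-t))^2) by (apply pow2_gt_0; auto).
  replace (- (1 - b * s) * (a * (1 - s * (1 - t)) ^ 2)) with (- ((1 - b*s)*a * (1 - s*(1-t))^2)) by ring.
  nra.
Qed.

Lemma cond_dec a b s t : a <> 0 -> 0 < t -> t < 1 ->
  0 < (1-b*s) * (1 - s*(1-t)) -> 0 < (1 - b - t) * (a * (1 - s*(1-t))) ->
  (1-b*s) * (1 - s*(1-t)) * (1 - b - t) < 0 -> (1 - b*s) * a < 0 ->
  ((1 - s*(1-t)) * (1 - b - t) + t * (1 - b - t) + b * t * (1 - s*(1-t))) * ((1 - s*(1-t)) * (1 - b - t)) < 0 ->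
  (1 - s*(1-t)) <> 0 /\ 1 - b - t <> 0 /\
    (s <> 0 -> 0 < (1 - b * s) / (1 - s * (1 - t))) /\ 0 < (1 - b - t) / (a * (1 - s * (1 - t))) /\
    1 + t * phi' b s t < 0 /\ phi' b s t < 0 /\ 0 < - (1 - b*s) / (a * (1 - s*(1-t))^2).
Proof.
intros Ha Ht Ht1 H1 H2 H3 H4 H5.
assert (Hw : 1 - s*(1-t) <> 0) by (intro e; rewrite e in H1; lra).
assert (Hv : 1 - b - t <> 0) by (intro e; rewrite e in H2; lra).
repeat split; auto.
- intros _. apply div_pos. auto.
- apply div_pos. auto.
- rewrite one_phi'_eq; auto. apply div_neg. auto.
- rewrite phi'_eq; auto. apply div_neg.
  replace ((1 - b * s) * (1 - t) * ((1 - s * (1 - t)) * (1 - b - t))) with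
   ((1 - t) * ((1-b*s) * (1 - s*(1-t)) * (1 - b - t))) by ring.
  nra.
- apply div_pos. assert (0 < (1 - s*(1-t))^2) by (apply pow2_gt_0; auto).
  replace (- (1 - b * s) * (a * (1 - s * (1 - t)) ^ 2)) with (- ((1 - b*s)*a * (1 - s*(1-t))^2)) by ring.
  nra.
Qed.


Lemma G_one a s : G a 0 s 1 = 1.
Proof.
unfold G, Rpower. destruct (Req_EM_T s 0).
- replace (- (1 - 0 - 1)) with 0 by ring. replace (- 0) with 0 by ring.
  rewrite Rmult_0_l, exp_0. ring.
- replace ((1 - 0 * s) / (1 - s * (1 - 1))) with 1 by field. rewrite ln_1.
  replace (- 0) with 0 by ring. rewrite !Rmult_0_l, Rmult_0_r, exp_0. ring.
Qed.

Lemma interior_lt1 a s x : case1a a 0 s -> interiorR (inX a 0 s) x -> x < 1.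
Proof.
intros Hc [e [He H]]. unfold case1a in Hc.
assert (Hy : Rabs (x + e/2 - x) < e) by (rewrite Rabs_pos_eq; lra).
destruct (H (x + e/2) Hy) as [[_ [[? ?]|[_ [_ ?]]]]|[[[? [? ?]] _]|[[[? _] _]|[[? _] _]]]]; lra.
Qed.


Definition incP a b s l r := forall x y, l < x -> x < y -> y < r ->
    G a b s x < G a b s y /\ Ef a b s x < Ef a b s y /\ qmu a b s y < qmu a b s x.
Definition decP a b s l r := forall x y, l < x -> x < y -> y < r ->
    G a b s y < G a b s x /\ Ef a b s y < Ef a b s x /\ qmu a b s x < qmu a b s y.
Definition memP a b s l r := forall t x, inI a b s t -> G a b s t = x -> interiorR (inX a b s) x -> l < t < r.

Lemma sdiv s : 0 < s -> s * ((s-1)/s) = s - 1.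
Proof. intros; field; lra. Qed.

Lemma C1a a b s : case1a a b s -> exists l r, 0 <= l /\ memP a b s l r /\ incP a b s l r.
Proof.
intros Hc. pose proof Hc as (Ha & Hbs & Hb).
assert (Hw : forall t, ((s <= 1 /\ 0 < t) \/ (1 < s /\ (s-1)/s < t)) -> t < 1 -> 0 < t /\ 0 < 1 - s*(1-t)).
{ intros t [[H1 H2]|[H1 H2]] Ht.
  - split; auto. destruct (Rle_lt_dec 0 s); nra.
  - pose proof (sdiv s ltac:(lra)).
    assert (0 < (s-1)/s) by (apply Rdiv_lt_0_compat; lra). nra. }
assert (Hinc : forall l, 0 <= l -> (forall t, l < t < 1 - b -> (s <= 1 /\ 0 < t) \/ (1 < s /\ (s-1)/s < t)) ->
   incP a b s l (1 - b)).
{ intros l Hl Hlt. unfold incP. apply pkg_inc; try lra.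
  intros t Ht. destruct (Hw t (Hlt t Ht) ltac:(lra)) as [Ht0 Hw0].
  apply cond_inc; try lra.
  - apply Rmult_lt_0_compat; lra.
  - apply Rmult_lt_0_compat; try lra. apply Rmult_lt_0_compat; lra.
  - apply Rmult_lt_0_compat; try lra. apply Rmult_lt_0_compat; lra.
  - apply Rmult_lt_0_compat; lra. }
assert (Hm : forall t x, inI a b s t -> G a b s t = x -> interiorR (inX a b s) x ->
   ((s <= 1 /\ 0 < t) \/ (1 < s /\ (s-1)/s < t)) /\ t < 1 - b).
{ intros t x HI HG Hx.
  destruct HI as [[_ [Hs Hb']] | [[Hc' _]|[[Hc' _]|[Hc' _]]]];
    try (unfold case1b, case2a, case2b in Hc'; lra).
  split; auto. destruct Hb' as [[? ?]|[Hb0 Ht1]]; [lra|].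
  subst b. destruct (Rle_lt_or_eq_dec _ _ Ht1) as [|e]; [lra|]. subst t.
  rewrite G_one in HG. pose proof (interior_lt1 a s x Hc Hx). lra. }
destruct (Rle_lt_dec s 1) as [hs|hs].
- exists 0, (1-b). split; [lra|split].
  + intros t x HI HG Hx. destruct (Hm t x HI HG Hx) as [[[? ?]|[? ?]] ?]; lra.
  + apply Hinc; [lra|]. intros; left; lra.
- exists ((s-1)/s), (1-b). split; [|split].
  + left. apply Rdiv_lt_0_compat; lra.
  + intros t x HI HG Hx. destruct (Hm t x HI HG Hx) as [[[? ?]|[? ?]] ?]; lra.
  + apply Hinc; [left; apply Rdiv_lt_0_compat; lra|]. intros; right; lra.
Qed.

Definition Pq b s t := (1 - s*(1-t)) * (1 - b - t) + t * (1 - b - t) + b * t * (1 - s*(1-t)).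
Lemma Pq_id b s t : ((1-b)*s + 1) * Pq b s t = - (((1-b)*s+1)*t - s*(1-b))^2 + (1-b)*(1-b*s).
Proof. unfold Pq. ring. Qed.

Lemma C2b a b s : case2b a b s -> exists l r, 0 <= l /\ memP a b s l r /\ incP a b s l r.
Proof.
intros Hc. pose proof Hc as (Ha & Hbs & Hb).
assert (hs : 0 < s) by nra.
exists 0, (1-b). split; [lra|split].
- intros t x HI _ _.
  destruct HI as [[Hc' _] | [[Hc' _]|[[Hc' _]|[_ ?]]]];
    try (unfold case1a, case1b, case2a in Hc'; lra). lra.
- unfold incP. apply pkg_inc; try lra.
  intros t Ht. assert (Hw : 1 - s*(1-t) < 0) by nra.
  assert (Haw : 0 < a * (1 - s*(1-t))) by nra.
  apply cond_inc; try lra.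
  + nra.
  + apply Rmult_lt_0_compat; lra.
  + assert (0 < (1 - b*s) * (1 - s*(1-t))) by nra. apply Rmult_lt_0_compat; lra.
  + nra.
Qed.

Lemma C1b a b s : case1b a b s -> exists l r, 0 <= l /\ memP a b s l r /\ decP a b s l r.
Proof.
intros Hc. pose proof Hc as (Ha & Hbs & Hb).
assert (hs : 1 < s) by nra.
pose proof (sdiv s ltac:(lra)) as Hsd.
exists (1-b), ((s-1)/s). split; [lra|split].
- intros t x HI _ _.
  destruct HI as [[Hc' _] | [[_ [[? [? ?]]|[? [? ?]]]]|[[Hc' _]|[Hc' _]]]];
    try (unfold case1a, case2a, case2b in Hc'; lra); lra.
- unfold decP. apply pkg_dec; try lra.
  intros t Ht. assert (Hw : 1 - s*(1-t) < 0) by nra.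
  assert (Ht1 : t < 1) by nra.
  assert (HP : Pq b s t < 0).
  { destruct (Rle_lt_or_eq_dec b 1 (proj2 Hb)) as [hb|hb].
    - pose proof (Pq_id b s t). assert (0 < (1-b)*s+1) by nra.
      assert ((1-b)*(1-b*s) < 0) by nra.
      assert (((1-b)*s + 1) * Pq b s t < 0).
      { rewrite Pq_id. pose proof (pow2_ge_0 (((1-b)*s+1)*t - s*(1-b))). lra. }
      destruct (Rle_lt_dec 0 (Pq b s t)); [|lra]. nra.
    - subst b. unfold Pq. nra. }
  assert (Haw : a * (1 - s*(1-t)) < 0) by nra.
  assert (Hwv : 0 < (1 - s*(1-t)) * (1 - b - t)) by nra.
  apply cond_dec; try lra.
  + nra.
  + nra.
  + assert (0 < (1 - b*s) * (1 - s*(1-t))) by nra. nra.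
  + nra.
  + fold (Pq b s t). nra.
Qed.

Lemma C2a a b s : case2a a b s -> exists l r, 0 <= l /\ memP a b s l r /\ decP a b s l r.
Proof.
intros Hc. pose proof Hc as (Ha & Hbs & Hb).
exists (1-b), (mubar b s). split; [lra|split].
- intros t x HI _ _.
  destruct HI as [[Hc' _] | [[Hc' _]|[[_ ?]|[Hc' _]]]];
    try (unfold case1a, case1b, case2b in Hc'; lra); lra.
- unfold decP. apply pkg_dec; try lra.
  intros t Ht.
  set (c := (1-b)*s + 1).
  set (D := sqrt ((1 - b) * (1 - b * s))).
  assert (HD0 : 0 <= D) by apply sqrt_pos.
  assert (HD2 : D * D = (1-b)*(1-b*s)) by (apply sqrt_sqrt; nra).
  assert (HDc : D * D = 1 - b * c) by (unfold c; lra).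
  assert (Hmb : c <> 0 -> mubar b s * c = s*(1-b) + D).
  { intro. unfold mubar. fold D. fold c. field. auto. }
  assert (Hc0 : c <> 0).
  { intro e. unfold mubar in Ht. fold D in Ht. fold c in Ht. rewrite e in Ht.
    unfold Rdiv in Ht. rewrite Rinv_0, Rmult_0_r in Ht. lra. }
  specialize (Hmb Hc0).
  set (y := c * t - s*(1-b)).
  assert (HcP : c * Pq b s t = (D - y) * (D + y)).
  { pose proof (Pq_id b s t) as HH. fold c in HH. rewrite HH. unfold y. rewrite <- HD2. ring. }
  assert (Hy0 : (1-b)*(1-b*s) = c*(1-b) - s*(1-b)) by (unfold c; ring).
  assert (Ht1 : t < 1 /\ 0 < Pq b s t).
  { destruct (Rlt_dec 0 c) as [hc|hc].
    - assert (ht : c * t < c * mubar b s) by (apply Rmult_lt_compat_l; lra).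
      assert (D < 1) by nra.
      assert (c * (1-b) < c * t) by (apply Rmult_lt_compat_l; lra).
      split; [nra|]. assert (0 < (D - y) * (D + y)) by (apply Rmult_lt_0_compat; unfold y; nra). nra.
    - assert (hc' : c < 0) by lra.
      assert (ht : c * mubar b s < c * t) by nra.
      assert (hyD : D < y) by (unfold y; lra).
      assert (c * Pq b s t < 0) by nra.
      split.
      + destruct (Rlt_dec t 1) as [|h]; [auto|].
        assert (c * t <= c) by nra.
        assert (1 - b * c <= 1) by nra. assert (1 < D * D) by (unfold y in hyD; unfold c in *; nra). nra.
      + nra. }
  destruct Ht1 as [Ht1 HP].
  assert (Hw : 0 < 1 - s*(1-t)).
  { destruct (Rle_lt_dec 0 s); nra. }
  assert (Haw : a * (1 - s*(1-t)) < 0) by nra.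
  assert (Hwv : (1 - s*(1-t)) * (1 - b - t) < 0) by nra.
  apply cond_dec; try lra.
  + nra.
  + nra.
  + nra.
  + nra.
  + fold (Pq b s t). nra.
Qed.


Lemma pm a b s nu K m t : 0 < nu -> 0 < K -> 0 < t -> G a b s t = nu * m / K ->
  m / t = K * Ef a b s t / nu.
Proof.
intros Hn HK Ht HG. rewrite G_Ef in HG.
assert (m = K * (t * Ef a b s t) / nu) by (rewrite HG; field; lra).
rewrite H. field. lra.
Qed.

Lemma cmpE K nu e1 e2 : 0 < nu -> 0 < K -> e1 < e2 -> K * e1 / nu < K * e2 / nu.
Proof. intros. unfold Rdiv. apply Rmult_lt_compat_r. apply Rinv_0_lt_compat; auto.
apply Rmult_lt_compat_l; auto. Qed.

Lemma combine_inc a b s nu K (mu : R -> R) l r (Dm : R -> Prop) : 0 < nu -> 0 < K -> 0 <= l ->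
  incP a b s l r -> (forall m, Dm m -> l < mu m < r /\ G a b s (mu m) = nu*m/K) ->
  forall m1 m2, Dm m1 -> Dm m2 -> m1 < m2 ->
  / mu m2 < / mu m1 /\ m1 / mu m1 < m2 / mu m2 /\ qmu a b s (mu m2) < qmu a b s (mu m1).
Proof.
intros Hn HK Hl Hinc Hm m1 m2 D1 D2 H12.
destruct (Hm m1 D1) as [I1 G1]. destruct (Hm m2 D2) as [I2 G2].
assert (Hx : nu * m1 / K < nu * m2 / K).
{ unfold Rdiv. apply Rmult_lt_compat_r. apply Rinv_0_lt_compat; auto. apply Rmult_lt_compat_l; auto. }
assert (Hlt : mu m1 < mu m2).
{ destruct (total_order_T (mu m1) (mu m2)) as [[h|h]|h]; auto.
  - rewrite h in G1. lra.
  - destruct (Hinc (mu m2) (mu m1)) as [? _]; lra. }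
destruct (Hinc (mu m1) (mu m2)) as [_ [HE Hq]]; try lra.
split; [|split]; auto.
- apply Rinv_lt_contravar; auto. apply Rmult_lt_0_compat; lra.
- rewrite (pm a b s nu K m1 (mu m1)), (pm a b s nu K m2 (mu m2)); try lra.
  apply cmpE; auto.
Qed.

Lemma combine_dec a b s nu K (mu : R -> R) l r (Dm : R -> Prop) : 0 < nu -> 0 < K -> 0 <= l ->
  decP a b s l r -> (forall m, Dm m -> l < mu m < r /\ G a b s (mu m) = nu*m/K) ->
  forall m1 m2, Dm m1 -> Dm m2 -> m1 < m2 ->
  / mu m1 < / mu m2 /\ m1 / mu m1 < m2 / mu m2 /\ qmu a b s (mu m2) < qmu a b s (mu m1).
Proof.
intros Hn HK Hl Hdec Hm m1 m2 D1 D2 H12.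
destruct (Hm m1 D1) as [I1 G1]. destruct (Hm m2 D2) as [I2 G2].
assert (Hx : nu * m1 / K < nu * m2 / K).
{ unfold Rdiv. apply Rmult_lt_compat_r. apply Rinv_0_lt_compat; auto. apply Rmult_lt_compat_l; auto. }
assert (Hlt : mu m2 < mu m1).
{ destruct (total_order_T (mu m1) (mu m2)) as [[h|h]|h]; auto.
  - destruct (Hdec (mu m1) (mu m2)) as [? _]; lra.
  - rewrite h in G1. lra. }
destruct (Hdec (mu m2) (mu m1)) as [_ [HE Hq]]; try lra.
split; [|split]; auto.
- apply Rinv_lt_contravar; auto. apply Rmult_lt_0_compat; lra.
- rewrite (pm a b s nu K m1 (mu m1)), (pm a b s nu K m2 (mu m2)); try lra.
  apply cmpE; auto.
Qed.

Lemma part1 (a b s nu K : R) (hnu : 0 < nu) (hK : 0 < K) :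
  (setting a b s ->
   forall mu : R -> R,
   (forall m, 0 < m -> interiorR (inX a b s) (nu * m / K) ->
      inI a b s (mu m) /\ G a b s (mu m) = nu * m / K) ->
   let D := fun m => 0 < m /\ interiorR (inX a b s) (nu * m / K) in
   (0 < a * (1 - b * s) ->
      forall m1 m2, D m1 -> D m2 -> m1 < m2 -> / mu m2 < / mu m1) /\
   (a * (1 - b * s) < 0 ->
      forall m1 m2, D m1 -> D m2 -> m1 < m2 -> / mu m1 < / mu m2) /\
   (forall m1 m2, D m1 -> D m2 -> m1 < m2 ->
      m1 / mu m1 < m2 / mu m2 /\ qmu a b s (mu m2) < qmu a b s (mu m1))).
Proof.
intros Hset mu Hmu D.
assert (HD : forall l r, memP a b s l r -> forall m, D m -> l < mu m < r /\ G a b s (mu m) = nu*m/K).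
{ intros l r Hmem m [Hm Hi]. destruct (Hmu m Hm Hi) as [HI HG]. split; auto.
  apply (Hmem _ (nu*m/K)); auto. }
assert (Hcase : (exists l r, 0 <= l /\ memP a b s l r /\ incP a b s l r /\ 0 < a * (1 - b*s)) \/
                (exists l r, 0 <= l /\ memP a b s l r /\ decP a b s l r /\ a * (1 - b*s) < 0)).
{ destruct Hset as [h|[h|[h|h]]].
  - left. destruct (C1a a b s h) as (l&r&?&?&?). exists l, r. split; [auto|split; [auto|split; [auto|]]].
    destruct h as (?&?&?). nra.
  - right. destruct (C1b a b s h) as (l&r&?&?&?). exists l, r. split; [auto|split; [auto|split; [auto|]]].
    destruct h as (?&?&?). nra.
  - right. destruct (C2a a b s h) as (l&r&?&?&?). exists l, r. split; [auto|split; [auto|split; [auto|]]].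
    destruct h as (?&?&?). nra.
  - left. destruct (C2b a b s h) as (l&r&?&?&?). exists l, r. split; [auto|split; [auto|split; [auto|]]].
    destruct h as (?&?&?). nra. }
destruct Hcase as [(l&r&Hl&Hmem&Hinc&Hsg)|(l&r&Hl&Hmem&Hdec&Hsg)].
- pose proof (combine_inc a b s nu K mu l r D hnu hK Hl Hinc (HD l r Hmem)) as C.
  split; [|split].
  + intros _ m1 m2 ? ? ?. apply (C m1 m2); auto.
  + intros; lra.
  + intros m1 m2 ? ? ?. apply (C m1 m2); auto.
- pose proof (combine_dec a b s nu K mu l r D hnu hK Hl Hdec (HD l r Hmem)) as C.
  split; [|split].
  + intros; lra.
  + intros _ m1 m2 ? ? ?. apply (C m1 m2); auto.
  + intros m1 m2 ? ? ?. apply (C m1 m2); auto.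
Qed.


Lemma pow_mono K c q1 q2 : 0 < K -> 0 < c -> 0 < q1 -> 0 < q2 ->
  K * Rpower q1 (- c) < K * Rpower q2 (- c) -> q2 < q1.
Proof.
intros HK Hc H1 H2 H. destruct (Rlt_le_dec q2 q1) as [|h]; auto. exfalso.
assert (Rpower q2 (-c) <= Rpower q1 (-c)).
{ unfold Rpower. destruct (Rle_lt_or_eq_dec _ _ h) as [h'|h'].
  - left. apply exp_increasing. assert (ln q1 < ln q2) by (apply ln_increasing; auto). nra.
  - subst; lra. }
nra.
Qed.

Lemma up0 b s K q : uprime 0 b s K q = K * Rpower q (- b).
Proof.
unfold uprime, Rpower. destruct (Req_EM_T s 0).
- replace (- (0 * q)) with 0 by ring. rewrite exp_0. ring.
- replace (1 + 0 * s * q) with 1 by ring. rewrite ln_1, Rmult_0_r, exp_0. ring.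
Qed.

Lemma up3 a s K q : s <> 0 -> uprime a (/ s) s K q = K * Rpower q (- / s).
Proof.
intros hs. unfold uprime, Rpower. destruct (Req_EM_T s 0); [contradiction|].
replace (/ s - / s) with 0 by ring. rewrite Rmult_0_l, exp_0. ring.
Qed.

Lemma part2 (a b s nu K : R) (hnu : 0 < nu) (hK : 0 < K) :
  (a = 0 -> 0 < b < 1 ->
   (forall m q, 0 < m -> admissible a s q ->
      nu * m = (1 - rra a b s q) * uprime a b s K q ->
      uprime a b s K q / nu = m / (1 - b)) /\
   (forall m1 m2, 0 < m1 -> m1 < m2 -> m1 / (1 - b) < m2 / (1 - b)) /\
   (forall m1 m2 q1 q2, 0 < m1 -> m1 < m2 -> admissible a s q1 -> admissible a s q2 ->
      uprime a b s K q1 = nu * (m1 / (1 - b)) ->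
      uprime a b s K q2 = nu * (m2 / (1 - b)) -> q2 < q1)).
Proof.
intros ha hb. subst a. split; [|split].
- intros m q Hm Hq H. unfold rra in H.
  replace ((0 * q + b) / (0 * s * q + 1)) with b in H by (field).
  assert (Hm' : m = (1-b) * uprime 0 b s K q / nu).
  { apply (Rmult_eq_reg_l nu); [|lra]. rewrite H. field. lra. }
  rewrite Hm'. field. lra.
- intros. unfold Rdiv. apply Rmult_lt_compat_r; [apply Rinv_0_lt_compat; lra|lra].
- intros m1 m2 q1 q2 H1 H12 [Hq1 _] [Hq2 _] E1 E2. rewrite up0 in E1, E2.
  apply (pow_mono K b); try lra. rewrite E1, E2.
  apply Rmult_lt_compat_l; auto. unfold Rdiv. apply Rmult_lt_compat_r; [apply Rinv_0_lt_compat; lra|lra].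
Qed.

Lemma part3 (a b s nu K : R) (hnu : 0 < nu) (hK : 0 < K) :
  (1 < s -> b = / s ->
   (forall m q, 0 < m -> admissible a s q ->
      nu * m = (1 - rra a b s q) * uprime a b s K q ->
      uprime a b s K q / nu = s * m / (s - 1)) /\
   (forall m1 m2, 0 < m1 -> m1 < m2 -> s * m1 / (s - 1) < s * m2 / (s - 1)) /\
   (forall m1 m2 q1 q2, 0 < m1 -> m1 < m2 -> admissible a s q1 -> admissible a s q2 ->
      uprime a b s K q1 = nu * (s * m1 / (s - 1)) ->
      uprime a b s K q2 = nu * (s * m2 / (s - 1)) -> q2 < q1)).
Proof.
intros hs hb. subst b. split; [|split].
- intros m q Hm [Hq Hq'] H. unfold rra in H.
  replace ((a * q + / s) / (a * s * q + 1)) with (/ s) in H by (field; lra).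
  assert (Hm' : m = (1 - / s) * uprime a (/ s) s K q / nu).
  { apply (Rmult_eq_reg_l nu); [|lra]. rewrite H. field. lra. }
  rewrite Hm'. field. lra.
- intros. unfold Rdiv. apply Rmult_lt_compat_r; [apply Rinv_0_lt_compat; lra|nra].
- intros m1 m2 q1 q2 H1 H12 [Hq1 _] [Hq2 _] E1 E2. rewrite up3 in E1, E2 by lra.
  apply (pow_mono K (/ s)); try lra. apply Rinv_0_lt_compat; lra. rewrite E1, E2.
  apply Rmult_lt_compat_l; auto. unfold Rdiv. apply Rmult_lt_compat_r; [apply Rinv_0_lt_compat; lra|nra].
Qed.


Theorem proposition5 (a b s nu K : R) (hnu : 0 < nu) (hK : 0 < K) :
  (* Part 1: the setting of Proposition 4 *)
  (setting a b s ->
   forall mu : R -> R,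
   (forall m, 0 < m -> interiorR (inX a b s) (nu * m / K) ->
      inI a b s (mu m) /\ G a b s (mu m) = nu * m / K) ->
   let D := fun m => 0 < m /\ interiorR (inX a b s) (nu * m / K) in
   (0 < a * (1 - b * s) ->
      forall m1 m2, D m1 -> D m2 -> m1 < m2 -> / mu m2 < / mu m1) /\
   (a * (1 - b * s) < 0 ->
      forall m1 m2, D m1 -> D m2 -> m1 < m2 -> / mu m1 < / mu m2) /\
   (forall m1 m2, D m1 -> D m2 -> m1 < m2 ->
      m1 / mu m1 < m2 / mu m2 /\ qmu a b s (mu m2) < qmu a b s (mu m1)))
  /\
  (* Part 2: alpha = 0, beta in (0,1): constant markup, p(m) = m/(1-beta) *)
  (a = 0 -> 0 < b < 1 ->
   (forall m q, 0 < m -> admissible a s q ->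
      nu * m = (1 - rra a b s q) * uprime a b s K q ->
      uprime a b s K q / nu = m / (1 - b)) /\
   (forall m1 m2, 0 < m1 -> m1 < m2 -> m1 / (1 - b) < m2 / (1 - b)) /\
   (forall m1 m2 q1 q2, 0 < m1 -> m1 < m2 -> admissible a s q1 -> admissible a s q2 ->
      uprime a b s K q1 = nu * (m1 / (1 - b)) ->
      uprime a b s K q2 = nu * (m2 / (1 - b)) -> q2 < q1))
  /\
  (* Part 3: beta = 1/sigma, sigma > 1: constant markup, p(m) = sigma m/(sigma-1) *)
  (1 < s -> b = / s ->
   (forall m q, 0 < m -> admissible a s q ->
      nu * m = (1 - rra a b s q) * uprime a b s K q ->
      uprime a b s K q / nu = s * m / (s - 1)) /\
   (forall m1 m2, 0 < m1 -> m1 < m2 -> s * m1 / (s - 1) < s * m2 / (s - 1)) /\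
   (forall m1 m2 q1 q2, 0 < m1 -> m1 < m2 -> admissible a s q1 -> admissible a s q2 ->
      uprime a b s K q1 = nu * (s * m1 / (s - 1)) ->
      uprime a b s K q2 = nu * (s * m2 / (s - 1)) -> q2 < q1)).
Proof.
split; [exact (part1 a b s nu K hnu hK)|split].
- exact (part2 a b s nu K hnu hK).
- exact (part3 a b s nu K hnu hK).
Qed.
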